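(* Let $a$ be a nonzero element of $\mathbb Z_g$, and let $i$ be an integer with $1\le i\le k$. If $\vec \theta \in \Lambda$, then \[ \sum_{1 \leq m < i} \theta_{\{m,i\},-a} + \sum_{i < m \leq k} \theta_{\{i,m\},a} \equiv 0 \pmod{2 \pi},\] where an empty sum is $0$.
   Context: Let $g\ge 2$, $k\ge 2$ be integers, $\mathbb Z_g$ the integers mod $g$, and $d=\binom{k}{2}(g-1)$. Index the coordinates of $\mathbb R^d$ by pairs $(\{i,j\},a)$ with $1\le i<j\le k$ and $a\in\mathbb Z_g\setminus\{0\}$. Define $Z:(\mathbb Z_g)^k\to\mathbb R^d$ by $[Z(\vec x)]_{\{i,j\},a}=1-1/g$ if $x_i-x_j=a$ and $-1/g$ otherwise. Define $\Phi(\vec\theta)=\sum_{\vec x\in(\mathbb Z_g)^k} g^{-k}e^{i\vec\theta\cdot Z(\vec x)}$ for $\vec\theta\in\mathbb R^d$, and $\Lambda=\{\vec\theta\in\mathbb R^d: |\Phi(\vec\theta)|=1\}$. *)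

(* Defs.v *)
From HB Require Import structures.
From mathcomp Require Import all_boot all_order all_algebra.
From mathcomp Require Import reals trigo.
From mathcomp Require Import complex.
Set Implicit Arguments. Unset Strict Implicit. Unset Printing Implicit Defensive.
Import Order.TTheory GRing.Theory Num.Theory.
Local Open Scope ring_scope.
Local Open Scope complex_scope.

(* Indices 1..k are represented by 'I_k (0-based).  A vector theta in R^d,
   d = C(k,2)(g-1), is represented by a function theta i j a whose value is
   only used for i < j and a != 0 (coordinate ({i,j},a)). *)

Definition Zc (R : realType) (g k : nat) (x : 'I_k -> 'Z_g) (i j : 'I_k) (a : 'Z_g) : R :=
  if x i - x j == a then 1 - (g%:R)^-1 else - (g%:R)^-1.

Definition dotZ (R : realType) (g k : nat) (theta : 'I_k -> 'I_k -> 'Z_g -> R)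
  (x : 'I_k -> 'Z_g) : R :=
  \sum_(i : 'I_k) \sum_(j : 'I_k | (i < j)%N) \sum_(a : 'Z_g | a != 0)
     theta i j a * Zc R x i j a.

Definition expi (R : realType) (t : R) : R[i] := (cos t) +i* (sin t).

Definition Phi (R : realType) (g k : nat) (theta : 'I_k -> 'I_k -> 'Z_g -> R) : R[i] :=
  \sum_(x : {ffun 'I_k -> 'Z_g}) ((g%:R ^+ k)^-1)%:C * expi (dotZ theta x).

Definition Lambda (R : realType) (g k : nat) (theta : 'I_k -> 'I_k -> 'Z_g -> R) : Prop :=
  `|Phi theta| = 1.

(* Main.v *)
Require Import Defs.
From HB Require Import structures.
From mathcomp Require Import all_boot all_order all_algebra.
From mathcomp Require Import reals trigo.
From mathcomp Require Import complex.
Import Order.TTheory GRing.Theory Num.Theory.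
Set Implicit Arguments. Unset Strict Implicit.
Local Open Scope ring_scope.
Lemma cos_nat (R : realType) (x : R) (m : nat) : cos (x + m%:R * (2 * pi)) = cos x.
Proof. by rewrite mulr_natl mulr_natl (periodicn (@cosD2pi R)). Qed.

Lemma cos_int (R : realType) (x : R) (n : int) : cos (x + n%:~R * (2 * pi)) = cos x.
Proof.
case: n => m; first exact: cos_nat.
rewrite NegzE mulrNz mulNr -(@cos_nat _ (x - m.+1%:R * (2 * pi)) m.+1) subrK //.
Qed.

Lemma cos1_int (R : realType) (S : R) : cos S = 1 -> exists n : int, S = n%:~R * (2 * pi).
Proof.
move=> cS.
set T := 2 * pi.
have Tgt0 : 0 < T by rewrite mulr_gt0 // pi_gt0.
set n := Num.floor (S / T).
set r := S - n%:~R * T.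
have cr : cos r = 1 by rewrite /r -mulNr -intrN cos_int.
have r0 : 0 <= r.
  rewrite /r subr_ge0 -ler_pdivlMr //; exact: Num.Theory.floor_le.
have r1 : r < T.
  rewrite /r ltrBlDr -[X in _ < X + _]mul1r -mulrDl -(ltr_pdivrMr _ _ Tgt0) addrC.
  by have := Num.Theory.floorD1_gt (S / T); rewrite intrD.
exists n.
suff: r = 0 by move/eqP; rewrite subr_eq0 => /eqP.
have [rpi|rpi] := leP r pi.
  apply: (@cos_inj R); rewrite ?cos0 //; rewrite in_itv /= ?r0 ?rpi ?lexx ?pi_ge0 //.
exfalso.
have c2 : cos (T - r) = 1.
  by rewrite addrC /T mulr_natl cosD2pi cosN.
have : T - r = 0.
  apply: (@cos_inj R); rewrite ?cos0 // in_itv /= ?lexx ?pi_ge0 //.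
  rewrite subr_ge0 ltW //= lerBlDr /T mulr_natl mulr2n lerD2l ltW //.
by move/eqP; rewrite subr_eq0 => /eqP rT; move: r1; rewrite rT ltxx.
Qed.
Local Open Scope complex_scope.

Lemma sum_if_eq (R : realType) (I : finType) (P : pred I) (j : I) (F : I -> R) :
  \sum_(q | P q) (if q == j then F q else 0) = if P j then F j else 0.
Proof.
rewrite big_mkcond (bigD1 j) //= eqxx big1 ?addr0 //.
by move=> q /negbTE ->; case: (P q).
Qed.

Lemma norm_expi (R : realType) (t : R) : `|expi t| = 1.
Proof. by rewrite normc_def /= cos2Dsin2 sqrtr1. Qed.

Section Main.
Variables (R : realType) (g k : nat) (theta : 'I_k -> 'I_k -> 'Z_g -> R).

Definition D0 : R := \sum_(p : 'I_k) \sum_(q : 'I_k | (p < q)%N) \sum_(b : 'Z_g | b != 0)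
     theta p q b * - (g%:R)^-1.
Definition E (x : 'I_k -> 'Z_g) : R := \sum_(p : 'I_k) \sum_(q : 'I_k | (p < q)%N)
   \sum_(b : 'Z_g | b != 0) theta p q b * (x p - x q == b)%:R.

Lemma dotZE x : dotZ theta x = D0 + E x.
Proof.
rewrite /dotZ /D0 /E -big_split; apply: eq_bigr => p _.
rewrite -big_split; apply: eq_bigr => q _.
rewrite -big_split; apply: eq_bigr => b _.
rewrite /Zc; case: eqP => _; rewrite /= ?mulr0 ?addr0 // mulrDr mulr1 addrC; reflexivity.
Qed.

Lemma E_inner (x : 'I_k -> 'Z_g) p q :
  \sum_(b : 'Z_g | b != 0) theta p q b * (x p - x q == b)%:R =
  if x p - x q != 0 then theta p q (x p - x q) else 0.
Proof.
rewrite -(sum_if_eq (fun b => b != 0) (x p - x q) (theta p q)).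
apply: eq_bigr => b _; rewrite eq_sym; case: eqP => _; by rewrite ?mulr1 ?mulr0.
Qed.


Lemma E0 : E (fun _ => 0) = 0.
Proof.
rewrite /E big1 // => p _; rewrite big1 // => q _.
by rewrite E_inner subrr eqxx.
Qed.

Lemma E_shift (i : 'I_k) (a : 'Z_g) : a != 0 ->
  E [ffun m => if m == i then a else 0] =
  \sum_(m : 'I_k | (m < i)%N) theta m i (- a)
    + \sum_(m : 'I_k | (i < m)%N) theta i m a.
Proof.
move=> ha; rewrite /E.
transitivity (\sum_(p : 'I_k) \sum_(q : 'I_k | (p < q)%N)
   ((if q == i then theta p q (-a) else 0) + (if p == i then theta p q a else 0))).
  apply: eq_bigr => p _; apply: eq_bigr => q pq.
  rewrite E_inner !ffunE.
  case: (eqVneq p i) => [ep|np]; case: (eqVneq q i) => [eq|nq].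
  - by move: pq; rewrite ep eq ltnn.
  - by rewrite subr0 ha add0r ep.
  - by rewrite sub0r oppr_eq0 ha addr0 eq.
  - by rewrite subrr eqxx addr0.
under eq_bigr => p _ do rewrite big_split /=.
rewrite big_split /=; congr (_ + _).
  rewrite [RHS]big_mkcond /=; apply: eq_bigr => p _.
  by rewrite (sum_if_eq (fun q : 'I_k => (p < q)%N)).
transitivity (\sum_(p : 'I_k) (if p == i then \sum_(q : 'I_k | (p < q)%N) theta p q a else 0)).
  apply: eq_bigr => p _; case: eqP => // _; exact: big1.
by rewrite (sum_if_eq xpredT).
Qed.
End Main.

Theorem lemma2p5 (R : realType) (g k : nat) (hg : (2 <= g)%N) (hk : (2 <= k)%N)
  (a : 'Z_g) (ha : a != 0) (i : 'I_k) (theta : 'I_k -> 'I_k -> 'Z_g -> R) :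
  Lambda theta ->
  exists n : int,
    \sum_(m : 'I_k | (m < i)%N) theta m i (- a)
    + \sum_(m : 'I_k | (i < m)%N) theta i m a = n%:~R * (2 * pi).
Proof.
rewrite /Lambda /Phi => HL.
set c : R := (g%:R ^+ k)^-1.
have gpos : (0 < g%:R :> R) by rewrite ltr0n (leq_trans _ hg).
have c0 : 0 < c by rewrite /c invr_gt0 exprn_gt0.
set F := fun x : {ffun 'I_k -> 'Z_g} => c%:C * expi (dotZ theta x).
have nF : forall x, `|F x| = c%:C.
  move=> x; rewrite /F normrM norm_expi mulr1 ger0_norm // ler0c ltW //.
have card : #|{ffun 'I_k -> 'Z_g}| = (g ^ k)%N.
  by rewrite card_ffun card_ord /= Zp_cast // card_ord.
have HS : `|\sum_(x | xpredT x) F x| = \sum_(x | xpredT x) `|F x|.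
  rewrite HL (eq_bigr _ (fun x _ => nF x)) sumr_const card -rmorphMn /=.
  by rewrite /c -mulr_natl natrX mulfV // expf_neq0 // gt_eqF.
have [t _ defF] := normC_sum_eq HS.
set x0 : {ffun 'I_k -> 'Z_g} := [ffun=> 0].
set x1 : {ffun 'I_k -> 'Z_g} := [ffun m => if m == i then a else 0].
have eF : F x1 = F x0 by rewrite (defF x1) // (defF x0) // !nF.
have : expi (dotZ theta x1) = expi (dotZ theta x0).
  apply: (mulfI (x := c%:C)); last exact: eF.
  by apply/eqP => /(@complexI R c 0) h; move: c0; rewrite h ltxx.
case => ec es.
apply: cos1_int.
have -> : \sum_(m : 'I_k | (m < i)%N) theta m i (- a)
    + \sum_(m : 'I_k | (i < m)%N) theta i m a = dotZ theta x1 - dotZ theta x0.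
  rewrite !dotZE -(@E_shift _ _ _ theta i a ha).
  have -> : E theta x0 = 0 by rewrite -(E0 theta); apply: eq_bigr => p _; apply: eq_bigr => q _; apply: eq_bigr => b _; rewrite !ffunE.
  by rewrite addr0 addrC addKr.
by rewrite cosB ec es -!expr2 cos2Dsin2.
Qed.
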